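(* Let $n\ge k\ge 2$ be integers. Then \[ \mathsf{opt}_{\operatorname{bandit}}^{\operatorname{obl}}(n,k)\ge \frac{k-1}{2}\left\lfloor \log_k n\right\rfloor. \]
   Context: Prediction with expert advice in the realizable case: $\mathcal{Y}=\{1,\dots,k\}$, $\mathcal{X}=[k]^n$, experts $h_i(x)=x_i$, $i=1,\dots,n$. $\mathcal{P}_0$ is the set of finite sequences of examples in $\mathcal{X}\times\mathcal{Y}$ consistent with some $h_i$. Bandit feedback against an oblivious adversary: the adversary fixes $S\in\mathcal{P}_0$ in advance; in round $t$ the learner receives the instance $x_t$ of $S$, draws $\hat y_t$ from a distribution depending on past observations and $x_t$, and learns only whether $\hat y_t$ equals the label $y_t$ of $S$. $\mathsf{opt}_{\operatorname{bandit}}^{\operatorname{obl}}(n,k)=\inf_{\text{learner}}\sup_{S\in\mathcal{P}_0}$ expected number of mistakes ($\hat y_t\ne y_t$). *)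

(* Defs.v *)
From HB Require Import structures.
From mathcomp Require Import all_boot all_order all_algebra.
From mathcomp Require Import all_classical all_reals ereal.
Set Implicit Arguments. Unset Strict Implicit. Unset Printing Implicit Defensive.
Import Order.TTheory GRing.Theory Num.Theory.
Local Open Scope ring_scope.
Local Open Scope classical_set_scope.

(* Labels Y = {1,..,k} are represented by 'I_k (= {0,..,k-1});
   instances X = [k]^n are finite functions 'I_n -> 'I_k;
   expert h_i (i : 'I_n) maps x to x i. *)
Definition inst (n k : nat) := {ffun 'I_n -> 'I_k}.
Definition example (n k : nat) := (inst n k * 'I_k)%type.

Definition realizable (n k : nat) (S : seq (example n k)) : Prop :=
  exists i : 'I_n, all (fun e : example n k => e.1 i == e.2) S.

(* A learner's observation in a round: the instance, its own prediction,
   and the bandit feedback bit (prediction == true label). *)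
Definition obs (n k : nat) := (inst n k * 'I_k * bool)%type.

Definition learner (R : realType) (n k : nat) :=
  seq (obs n k) -> inst n k -> {ffun 'I_k -> R}.

Definition valid_learner (R : realType) (n k : nat) (L : learner R n k) : Prop :=
  forall (h : seq (obs n k)) (x : inst n k),
    (forall y, 0 <= L h x y) /\ \sum_(y : 'I_k) L h x y = 1.

Fixpoint exp_mistakes (R : realType) (n k : nat) (L : learner R n k)
    (h : seq (obs n k)) (S : seq (example n k)) : R :=
  match S with
  | [::] => 0
  | (x, y) :: S' =>
      \sum_(yh : 'I_k) L h x yh *
        ((yh != y)%:R + exp_mistakes L (rcons h (x, yh, yh == y)) S')
  end.

Definition opt_bandit_obl (R : realType) (n k : nat) : \bar R :=
  ereal_inf [set ereal_sup [set (exp_mistakes L [::] S)%:E | S in realizable (k:=k) (n:=n)]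
            | L in @valid_learner R n k].

(* Main.v *)
Require Import Defs.
From HB Require Import structures.
From mathcomp Require Import all_boot all_order all_algebra.
From mathcomp Require Import all_classical all_reals ereal.
From mathcomp Require Import ring lra.
Import Order.TTheory GRing.Theory Num.Theory.
Local Open Scope ring_scope.

Section Aux.
Variables (R : realType) (n k : nat) (L : learner R n k).
Hypothesis hL : valid_learner L.
Hypothesis kpos : (0 < k)%N.

Fixpoint tsum (d : nat) (f : seq 'I_k -> R) : R :=
  if d is d'.+1 then \sum_(y : 'I_k) tsum d' (fun s => f (y :: s)) else f [::].

Lemma tsum_le d : forall f g, (forall s, f s <= g s) -> tsum d f <= tsum d g.
Proof.
elim: d => [|d IH] f g H /=; first exact: H.
by apply: ler_sum => y _; apply: IH.
Qed.

Lemma tsum_add d : forall f g, tsum d (fun s => f s + g s) = tsum d f + tsum d g.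
Proof.
elim: d => [|d IH] f g //=.
by rewrite -big_split; apply: eq_bigr => y _; rewrite IH.
Qed.

Lemma tsum_scale d : forall a f, tsum d (fun s => a * f s) = a * tsum d f.
Proof.
elim: d => [|d IH] a f //=.
by rewrite mulr_sumr; apply: eq_bigr => y _; rewrite IH.
Qed.

Lemma tsum_const d c : tsum d (fun _ => c) = c * (k ^ d)%:R.
Proof.
elim: d => [|d IH] /=; first by rewrite mulr1.
under eq_bigr do rewrite IH.
rewrite sumr_const card_ord expnS natrM -[X in X *+ k]mulr1 -mulr_natr ; ring.
Qed.

Lemma tsum_sum d : forall (F : 'I_k -> seq 'I_k -> R),
  tsum d (fun s => \sum_(g : 'I_k) F g s) = \sum_g tsum d (F g).
Proof.
elim: d => [|d IH] F //=.
rewrite exchange_big /=; apply: eq_bigr => y _.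
by rewrite (IH (fun g s => F g (y :: s))).
Qed.

Lemma tsum_lt d : forall f c, (forall s, size s = d -> f s < c) ->
  tsum d f < (k ^ d)%:R * c.
Proof.
elim: d => [|d IH] f c H /=; first by rewrite expn0 mul1r; apply: H.
apply: (@lt_le_trans _ _ (\sum_(y : 'I_k) (k ^ d)%:R * c)).
  apply: ltr_sum.
    by apply/hasP; exists (Ordinal kpos) => //; rewrite mem_index_enum.
  by move=> y _; apply: IH => s Hs; apply: H; rewrite /= Hs.
rewrite sumr_const card_ord expnS natrM -[X in X *+ k]mulr1 -mulr_natr.
by rewrite le_eqVlt; apply/orP; left; apply/eqP; ring.
Qed.

Lemma avg h x (G : 'I_k -> R) Q : (forall g, Q <= G g) -> Q <= \sum_g L h x g * G g.
Proof.
move=> HG; have [H0 H1] := hL h x.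
apply: (@le_trans _ _ (\sum_g L h x g * Q)).
  by rewrite -mulr_suml H1 mul1r.
by apply: ler_sum => g _; apply: ler_wpM2l.
Qed.

Section Phase.
Variables (d : nat) (x : inst n k) (T : seq 'I_k -> seq (example n k)) (B : R).
Hypothesis HB : forall h, B <= tsum d (fun s => exp_mistakes L h (T s)).

Definition W h r y := tsum d (fun s => exp_mistakes L h (nseq r (x, y) ++ T s)).
Let K : R := (k ^ d)%:R.

Lemma W_rec h r y : W h r.+1 y =
  \sum_g L h x g * ((g != y)%:R * K + W (rcons h (x, g, g == y)) r y).
Proof.
rewrite /W /= tsum_sum; apply: eq_bigr => g _.
by rewrite tsum_scale tsum_add tsum_const.
Qed.

Lemma W_ge r : forall h y, B <= W h r y.
Proof.
elim: r => [|r IH] h y; first exact: HB.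
rewrite W_rec; apply: avg => g.
rewrite -[B]add0r; apply: lerD; last exact: IH.
by apply: mulr_ge0 => //; rewrite ler0n.
Qed.

Lemma phase r : forall h (A : {set 'I_k}), (#|A| <= r)%N ->
  #|A|%:R * B + K * (#|A|%:R * (#|A|%:R - 1) / 2) <= \sum_(y in A) W h r y.
Proof.
have K0 : 0 <= K by rewrite ler0n.
elim: r => [|r IH] h A HA.
  have -> : A = finset.set0 by apply/eqP; rewrite -cards_eq0 -leqn0.
  by rewrite big_set0 cards0 !mul0r mulr0 addr0.
have E : \sum_(y in A) W h r.+1 y = \sum_g L h x g *
   \sum_(y in A) ((g != y)%:R * K + W (rcons h (x, g, g == y)) r y).
  under eq_bigr do rewrite W_rec.
  by rewrite exchange_big /=; apply: eq_bigr => g _; rewrite mulr_sumr.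
rewrite E; apply: avg => g.
set hf := rcons h (x, g, false).
case: (boolP (g \in A)) => Hg.
  rewrite (bigD1 g Hg) /= eqxx mul0r add0r.
  have E2 : \sum_(y in A | y != g) ((g != y)%:R * K + W (rcons h (x, g, g == y)) r y)
      = \sum_(y in A :\ g) (K + W hf r y).
    rewrite (eq_bigl (fun y => y \in A :\ g)); last by move=> y; rewrite in_setD1 andbC.
    apply: eq_bigr => y; rewrite in_setD1 => /andP[ne _].
    by rewrite eq_sym ne mul1r (negbTE ne) /hf; congr (_ + W (rcons h (x, g, _)) r y); rewrite eq_sym (negbTE ne).
  rewrite E2 big_split /= sumr_const.
  have C := cardsD1 g A; rewrite Hg add1n in C.
  have IH' := IH hf (A :\ g).
  rewrite C in HA; have {}IH' := IH' HA.
  have Wg := W_ge r (rcons h (x, g, true)) g.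
  rewrite C; move: IH' Wg; set a := #|A :\ g|; set S := \sum_(_ in _) _.
  rewrite -[K *+ a]mulr_natr => IH' Wg.
  have Ea : (a.+1)%:R = a%:R + 1 :> R by rewrite natr1.
  rewrite Ea; lra.
have E2 : \sum_(y in A) ((g != y)%:R * K + W (rcons h (x, g, g == y)) r y)
      = \sum_(y in A) (K + W hf r y).
  apply: eq_bigr => y Hy.
  have ne : g != y by apply/eqP => eq; rewrite eq Hy in Hg.
  by rewrite ne mul1r (negbTE ne).
rewrite E2 big_split /= sumr_const.
case: (set_0Vmem A) => [->|[a0 Ha0]].
  by rewrite big_set0 cards0 !mul0r mulr0 !addr0.
rewrite (bigD1 a0 Ha0) /=.
rewrite (eq_bigl (fun y => y \in A :\ a0)); last by move=> y; rewrite in_setD1 andbC.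
have C := cardsD1 a0 A; rewrite Ha0 add1n in C.
rewrite C in HA; have IH' := IH hf (A :\ a0) HA.
have Wg := W_ge r hf a0.
rewrite C; move: IH' Wg; set a := #|A :\ a0|; set S := \sum_(_ in _) _.
rewrite -[K *+ a.+1]mulr_natr => IH' Wg.
have Ea : (a.+1)%:R = a%:R + 1 :> R by rewrite natr1.
rewrite Ea; lra.
Qed.

End Phase.

Definition xinst (j : nat) : inst n k :=
  [ffun i : 'I_n => Ordinal (@ltn_pmod (i %/ k ^ j) k kpos)].

Fixpoint Sseq (j : nat) (s : seq 'I_k) : seq (example n k) :=
  if s is y :: s' then nseq k (xinst j, y) ++ Sseq j.+1 s' else [::].

Lemma main d : forall j h,
  (k ^ d)%:R * (d%:R * (k%:R - 1) / 2) <= tsum d (fun s => exp_mistakes L h (Sseq j s)).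
Proof.
elim: d => [|d IH] j h; first by rewrite /= mul0r mul0r mulr0.
rewrite [tsum _ _]/=.
have P := @phase d (xinst j) (Sseq j.+1) _ (IH j.+1) k h [set: 'I_k].
rewrite cardsT card_ord leqnn in P; have {}P := P isT.
rewrite (eq_bigl (fun y => y \in [set: 'I_k])); last by move=> y; rewrite finset.in_setT.
apply: le_trans P.
rewrite expnS natrM.
set a := (k ^ d)%:R; set b := k%:R.
rewrite le_eqVlt; apply/orP; left; apply/eqP.
rewrite -natr1.
ring.
Qed.

End Aux.

Fixpoint enc (k : nat) (s : seq 'I_k) : nat :=
  if s is y :: s' then (y + k * enc k s')%N else 0%N.
Arguments enc {k} s.

Lemma enc_lt k (s : seq 'I_k) : (enc s < k ^ size s)%N.
Proof.
elim: s => [|y s IH] /=; first by rewrite expn0.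
rewrite expnS; have := ltn_ord y.
move=> Hy; apply: (@leq_trans (k * (enc s).+1)).
  by rewrite mulnS -addSn leq_add2r.
by rewrite leq_mul2l IH orbT.
Qed.

Lemma enc_digit k (s : seq 'I_k) l : (l < size s)%N ->
  ((enc s %/ k ^ l) %% k = nth 0 (map val s) l)%N.
Proof.
elim: s l => [|y s IH] [|l] //= Hl.
  by rewrite expn0 divn1 addnC mulnC modnMDl modn_small.
have kpos : (0 < k)%N := leq_ltn_trans (leq0n y) (ltn_ord y).
rewrite expnS divnMA addnC mulnC divnMDl // (divn_small (ltn_ord y)) addn0.
exact: IH.
Qed.

Lemma real_Sseq n k (kpos : (0 < k)%N) (s : seq 'I_k) : forall j (i : 'I_n),
  (forall l, (l < size s)%N -> ((i %/ k ^ (j + l)) %% k = nth 0 (map val s) l)%N) ->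
  all (fun e : example n k => e.1 i == e.2) (Sseq n k kpos j s).
Proof.
elim: s => [|y s IH] j i H //=.
rewrite all_cat all_nseq; apply/andP; split.
  apply/orP; right; apply/eqP/val_inj => /=.
  by rewrite /xinst ffunE /=; have := H 0%N isT; rewrite addn0.
apply: IH => l Hl; have := H l.+1 Hl.
by rewrite -addSnnS.
Qed.

Theorem lemma4p10 (R : realType) (n k : nat) (hk : (2 <= k)%N) (hkn : (k <= n)%N) :
  (((k - 1)%:R / 2 * (trunc_log k n)%:R : R)%:E <= opt_bandit_obl R n k)%E.
Proof.
have kpos : (0 < k)%N by apply: leq_trans hk.
have n0 : (0 < n)%N by apply: leq_trans hkn.
set d := trunc_log k n.
have Hkd : (k ^ d <= n)%N := trunc_logP hk n0.
apply: le_ereal_inf_tmp => _ [L hL <-].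
have M := @main R n k L hL kpos d 0%N [::].
have [s [Hs Hc]] : exists s : seq 'I_k, size s = d /\
    (k - 1)%:R / 2 * d%:R <= exp_mistakes L [::] (Sseq n k kpos 0 s).
  apply: contrapT => Hn.
  have Hlt : forall s, size s = d ->
      exp_mistakes L [::] (Sseq n k kpos 0 s) < d%:R * (k%:R - 1) / 2.
    move=> s Hs; rewrite ltNge; apply/negP => Hle; apply: Hn; exists s; split => //.
    rewrite natrB; last exact: ltnW.
    suff -> : (k%:R - 1) / 2 * d%:R = d%:R * (k%:R - 1) / 2 :> R by [].
    ring.
  have := @tsum_lt R k kpos d _ _ Hlt.
  by rewrite ltNge M.
apply: le_ereal_sup_tmp.
exists (exp_mistakes L [::] (Sseq n k kpos 0 s))%:E; last by rewrite lee_fin.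
exists (Sseq n k kpos 0 s) => //.
have Hi : (enc s < n)%N by have := @enc_lt k s; rewrite Hs => H1; exact: leq_trans H1 Hkd.
exists (Ordinal Hi).
apply: real_Sseq => l Hl /=.
rewrite add0n; exact: enc_digit.
Qed.
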